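(* Let $a,b\in\mathbb R$, $\sigma\in(0,1]$ and $t\in[0,1]$. Then \[ \delta\big((1-t)\gamma_{a,\sigma}+t\gamma_{b,\sigma}\big)\le\frac14\big(\sigma^{-1}-1\big)^2-(1-t)\log(1-t)-t\log t, \] with the convention $0\log 0=0$.
   Context: On $\mathbb R$, $\gamma_{a,s}$ denotes the Gaussian measure with mean $a$ and variance $s$, and $\gamma=\gamma_{0,1}$. For a probability measure $\mu$ with density $f=d\mu/d\gamma$, $\delta(\mu)=\frac12\int|f'/f|^2d\mu-\int\log f\,d\mu$ is the log-Sobolev deficit. *)

(* Defs.v *)
From Stdlib Require Import Reals.
Open Scope R_scope.

(* Lebesgue density of the Gaussian measure gamma_{a,s} (mean a, variance s). *)
Definition gauss_density (a s x : R) : R :=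
  exp (- (x - a) ^ 2 / (2 * s)) / sqrt (2 * PI * s).

Definition mixture_density (a b s t x : R) : R :=
  (1 - t) * gauss_density a s x + t * gauss_density b s x.

Definition rel_density (a b s t x : R) : R :=
  mixture_density a b s t x / gauss_density 0 1 x.

Definition improper_int (f : R -> R) (l : R) : Prop :=
  forall eps : R, 0 < eps -> exists M : R, forall lo hi : R,
    lo <= - M -> M <= hi ->
    exists pr : Riemann_integrable f lo hi, Rabs (RiemannInt pr - l) < eps.

Definition xlnx (x : R) : R := if Req_EM_T x 0 then 0 else x * ln x.

(* Main.v *)
Require Import Defs.
From Stdlib Require Import Reals Lra Lia.
Module MCB.
From mathcomp Require Import all_boot all_order all_algebra.
From mathcomp Require Import all_classical all_reals all_analysis.
From mathcomp Require Import Rstruct Rstruct_topology.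
Set Implicit Arguments. Unset Strict Implicit. Unset Printing Implicit Defensive.
Import Order.TTheory GRing.Theory Num.Theory.
Import numFieldNormedType.Exports.
Local Open Scope classical_set_scope.
Local Open Scope ring_scope.
Lemma dq_bridge (F : R -> R) y l : derivable_pt_lim F y l ->
  (fun h : R => h^-1 * (F (h + y) - F y)) @ (0:R)^' --> l.
Proof.
move=> H; apply/(@cvgrPdist_lt _ R^o) => e /RltP /H [d Hd].
have d0 : (0:R) < d by apply/RltP; exact: cond_pos d.
near=> h.
have /eqP h0 : h != 0 by near: h; exact: nbhs_dnbhs_neq.
have hd : (Rabs h < d)%coqR.
  by apply/RltP; rewrite RabsE; near: h; exact: (@dnbhs0_lt R R^o (pos d) d0).
move: (Hd h h0 hd) => /RltP. rewrite RabsE distrC.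
rewrite /Rdiv RminusE RplusE RmultE RinvE.
by rewrite (addrC h y) [X in _ - X]mulrC.
Unshelve. all: by end_near. Qed.
Lemma RcosE (x : R) : Rtrigo_def.cos x = cos x.
Proof.
have := @cvg_cos_coeff' R x => /cvg_lim <- //.
apply/esym/cvg_lim; first exact: Rhausdorff.
rewrite /Rtrigo_def.cos; case: (exist_cos (Rsqr x)) => y.
rewrite /cos_in /infinite_sum /= => cos_ub.
apply/(@cvgrPdist_lt _ R^o) => /= e /RltP /cos_ub[N NU].
near=> n.
have nN : (n.-1 >= N)%coq_nat.
  apply/ssrnat.leP; near: n; exists N.+1 => // k /= Hk.
  by rewrite -ltnS prednK // (leq_trans _ Hk).
move: NU => /(_ _ nN) /[!RdistE] /RltP /=.
rewrite distrC sum_f_R0E.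
have -> : n.-1.+1 = n by near: n; exists 1%N => // k /= Hk; rewrite prednK.
congr (`| _ - _ | < e).
apply: eq_bigr=> k _. rewrite /cos_coeff' /cos_n.
rewrite /Rsqr RdivE !RmultE !RpowE INRE factE -expr2 -exprM -mul2n multE.
change (-1)%coqR with (-1 : R); by rewrite mulrAC.

Unshelve. all: by end_near. Qed.
Lemma derivable_bridge (F : R -> R) y l : derivable_pt_lim F y l ->
  derivable (F : R^o -> R^o) y 1 /\ derive1 (F : R -> R^o) y = l.
Proof.
move=> /dq_bridge H.
have E : forall h : R, h^-1 *: (((F : R^o -> R^o) \o shift y) (h *: (1:R^o)) - F y)
         = h^-1 * (F (h + y) - F y).
  by move=> h /=; rewrite /GRing.scale /= mulr1.
split.
  rewrite /derivable; apply/cvg_ex; exists l.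
  by apply: cvg_trans H; apply: near_eq_cvg; near=> h; rewrite E.
rewrite derive1E /derive; apply: cvg_lim => //.
by apply: cvg_trans H; apply: near_eq_cvg; near=> h; rewrite E.
Unshelve. all: by end_near. Qed.

Lemma R2E : (2%coqR : R) = 2%R.
Proof. by rewrite /= -[2%coqR]/(1 + 1)%coqR. Qed.

Lemma PIE : PI = pi.
Proof.
have H := @cos_02_uniq R (PI / 2)%coqR (pi / 2).
suff E : (PI / 2)%coqR = pi / 2.
  move: E; rewrite RdivE R2E => E.
  by rewrite -[PI](@divfK _ 2) // E divfK.
apply: H.
- apply/andP; split; apply/RleP; rewrite -?R2E; try change (0%R:R) with R0; have := PI_RGT_0; have := PI_4; lra.
- by rewrite -RcosE cos_PI2.
- exact: (@pihalf_02_cos_pihalf R).1.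
- exact: (@cos_pihalf R).
Qed.

Lemma gauss_eq (F : R -> R)
  (HF : forall x, derivable_pt_lim F x (exp (-(x*x)))) (F0 : F 0%coqR = 0%coqR) :
  forall x : R, 0 < x -> gauss_integral_proof.integral0_gauss x = F x.
Proof.
move=> x x0.
have := @continuous_FTC2 R gauss_fun F 0 x x0.
have gE : forall y : R, exp (-(y*y)) = gauss_fun y.
  by move=> y; rewrite RexpE /gauss_fun RoppE RmultE expr2.
have Fc : forall y, {for y, continuous F}.
  by move=> y; apply/continuity_pt_cvg; apply: derivable_continuous_pt; exists (exp (-(y*y))); exact: HF.
have H1 : {within `[0, x], continuous gauss_fun}.
  by apply: continuous_subspaceT => y; exact: continuous_gauss_fun.
have H2 : derivable_oo_LRcontinuous (F : R -> R^o) 0 x.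
  split.
  + by move=> y _; exact: (derivable_bridge (HF y)).1.
  + exact: cvg_at_right_filter (Fc 0).
  + exact: cvg_at_left_filter (Fc x).
have H3 : {in `]0, x[, derive1 (F : R -> R^o) =1 gauss_fun}.
  by move=> y _; rewrite (derivable_bridge (HF y)).2 gE.
move=> /(_ H1 H2 H3) E; rewrite /gauss_integral_proof.integral0_gauss /Rintegral E /=.
by rewrite F0 subr0.
Qed.

Lemma gauss_sq_lim (F : R -> R)
  (HF : forall x, derivable_pt_lim F x (exp (-(x*x)))) (F0 : F 0%coqR = 0%coqR) :
  forall eps, (0 < eps)%coqR -> exists M, forall x, (M < x)%coqR ->
    (Rabs (F x * F x - PI / 4) < eps)%coqR.
Proof.
move=> eps /RltP e0.
have C := @gauss_integral_proof.cvg_integral0_gauss_sqr R.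
move/(@cvgrPdist_lt _ R^o): C => /(_ _ e0).
rewrite /nbhs /= => -[M [_ HM]].
exists (Rmax M 0) => x /RltP; rewrite RmaxE gt_max => /andP[xM x0].
have := HM x xM; rewrite (gauss_eq HF F0) // -PIE.
rewrite RabsE distrC RminusE RmultE RdivE.
have -> : (4%coqR : R) = 4%R by rewrite -[4%coqR]/(IZR (Z.of_nat 4)) -INR_IZR_INZ INRE.
by rewrite expr2 => /RltP.
Qed.
End MCB.
From Coquelicot Require Import Coquelicot.
Open Scope R_scope.

Definition cont (g : R -> R) := forall x, continuous g x.

Definition iint (g : R -> R) (L : R) := forall eps, 0 < eps -> exists M, forall lo hi,
  lo <= - M -> M <= hi -> Rabs (RInt g lo hi - L) < eps.

Lemma cont_ex g a b : cont g -> ex_RInt g a b.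
Proof. intros Hg; apply (@ex_RInt_continuous R_CompleteNormedModule); intros; apply Hg. Qed.

Lemma iint_improper g L : cont g -> iint g L -> improper_int g L.
Proof.
intros Hg H eps Heps; destruct (H eps Heps) as [M HM]; exists M; intros lo hi Hlo Hhi.
exists (ex_RInt_Reals_0 _ _ _ (cont_ex g lo hi Hg)).
rewrite <- RInt_Reals; apply HM; auto.
Qed.

Lemma iint_ext g h L : (forall x, g x = h x) -> iint g L -> iint h L.
Proof.
intros E H eps Heps; destruct (H eps Heps) as [M HM]; exists M; intros lo hi Hlo Hhi.
rewrite <- (RInt_ext g); [ apply HM; auto | intros; apply E ].
Qed.

Lemma iint_plus g h L K : cont g -> cont h -> iint g L -> iint h K ->
  iint (fun x => g x + h x) (L + K).
Proof.
intros Cg Ch Hg Hh eps Heps.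
destruct (Hg (eps/2)) as [M1 H1]; [lra|]. destruct (Hh (eps/2)) as [M2 H2]; [lra|].
exists (Rmax M1 M2); intros lo hi Hlo Hhi.
assert (E := RInt_plus g h lo hi (cont_ex _ _ _ Cg) (cont_ex _ _ _ Ch)).
simpl in E; unfold plus in E; simpl in E. rewrite E.
assert (A1 := H1 lo hi ltac:(generalize (Rmax_l M1 M2); lra) ltac:(generalize (Rmax_l M1 M2); lra)).
assert (A2 := H2 lo hi ltac:(generalize (Rmax_r M1 M2); lra) ltac:(generalize (Rmax_r M1 M2); lra)).
revert A1 A2; unfold Rabs; repeat destruct Rcase_abs; lra.
Qed.

Lemma iint_scal g c L : cont g -> iint g L -> iint (fun x => c * g x) (c * L).
Proof.
intros Cg Hg eps Heps.
destruct (Hg (eps / (Rabs c + 1))) as [M HM].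
{ apply Rdiv_lt_0_compat; [lra|]. generalize (Rabs_pos c); lra. }
exists M; intros lo hi Hlo Hhi.
assert (E := RInt_scal g lo hi c (cont_ex _ _ _ Cg)). simpl in E; unfold scal in E; simpl in E; unfold mult in E; simpl in E.
rewrite E. replace (c * RInt g lo hi - c * L) with (c * (RInt g lo hi - L)) by ring.
rewrite Rabs_mult. specialize (HM lo hi Hlo Hhi).
assert (P : 0 <= Rabs c) by apply Rabs_pos.
apply Rle_lt_trans with (Rabs c * (eps / (Rabs c + 1))).
{ apply Rmult_le_compat_l; lra. }
replace eps with ((Rabs c + 1) * (eps / (Rabs c + 1))) at 2 by (field; lra).
apply Rmult_lt_compat_r; [apply Rdiv_lt_0_compat|]; lra.
Qed.

Lemma iint_le g h L K : cont g -> cont h -> iint g L -> iint h K ->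
  (forall x, g x <= h x) -> L <= K.
Proof.
intros Cg Ch Hg Hh Le.
destruct (Rle_or_lt L K) as [|LK]; [auto|exfalso].
destruct (Hg ((L-K)/2)) as [M1 H1]; [lra|]. destruct (Hh ((L-K)/2)) as [M2 H2]; [lra|].
set (M := Rmax (Rmax M1 M2) 0).
assert (M1 <= M /\ M2 <= M /\ 0 <= M) as (A1 & A2 & A3).
{ unfold M; generalize (Rmax_l (Rmax M1 M2) 0) (Rmax_r (Rmax M1 M2) 0) (Rmax_l M1 M2) (Rmax_r M1 M2); lra. }
specialize (H1 (-M) M ltac:(lra) ltac:(lra)). specialize (H2 (-M) M ltac:(lra) ltac:(lra)).
assert (RInt g (-M) M <= RInt h (-M) M).
{ apply RInt_le; try apply cont_ex; auto. lra. }
revert H1 H2; unfold Rabs; repeat destruct Rcase_abs; lra.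
Qed.

Lemma lim_pinf_eps (F : R -> R) (L : R) : is_lim F p_infty L ->
  forall eps, 0 < eps -> exists M, forall x, M <= x -> Rabs (F x - L) < eps.
Proof.
intros H eps Heps. apply is_lim_spec in H. destruct (H (mkposreal eps Heps)) as [M HM].
exists (M+1); intros x Hx; apply HM; lra.
Qed.

Lemma lim_minf_eps (F : R -> R) (L : R) : is_lim F m_infty L ->
  forall eps, 0 < eps -> exists M, forall x, x <= - M -> Rabs (F x - L) < eps.
Proof.
intros H eps Heps. apply is_lim_spec in H. destruct (H (mkposreal eps Heps)) as [M HM].
exists (-M+1); intros x Hx; apply HM; lra.
Qed.

Lemma RInt_antider g F a b : cont g -> (forall x, is_derive F x (g x)) ->
  RInt g a b = F b - F a.
Proof.
intros Cg D. apply is_RInt_unique. apply (@is_RInt_derive R_CompleteNormedModule); intros; [apply D| apply Cg].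
Qed.

Lemma iint_antider g F (Lp Lm : R) : cont g -> (forall x, is_derive F x (g x)) ->
  is_lim F p_infty Lp -> is_lim F m_infty Lm -> iint g (Lp - Lm).
Proof.
intros Cg D Hp Hm eps Heps.
destruct (lim_pinf_eps F Lp Hp (eps/2)) as [M1 H1]; [lra|].
destruct (lim_minf_eps F Lm Hm (eps/2)) as [M2 H2]; [lra|].
exists (Rmax M1 M2); intros lo hi Hlo Hhi.
rewrite (RInt_antider g F lo hi Cg D).
specialize (H1 hi ltac:(generalize (Rmax_l M1 M2); lra)).
specialize (H2 lo ltac:(generalize (Rmax_r M1 M2); lra)).
revert H1 H2; unfold Rabs; repeat destruct Rcase_abs; lra.
Qed.

Lemma chasles g a b c : cont g -> RInt g a c = RInt g a b + RInt g b c.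
Proof.
intros Cg. rewrite <- (RInt_Chasles g a b c); try apply cont_ex; auto.
Qed.

Definition tails (g : R -> R) := forall eps, 0 < eps -> exists M, forall u v,
  ((u <= - M /\ v <= - M) \/ (M <= u /\ M <= v)) -> Rabs (RInt g u v) < eps.

Lemma RInt_sw g a b : cont g -> RInt g b a = - RInt g a b.
Proof.
intros Cg. rewrite <- (opp_RInt_swap g a b); [reflexivity| apply cont_ex; auto].
Qed.

Lemma iint_tails g L : cont g -> iint g L -> tails g.
Proof.
intros Cg H eps Heps. destruct (H (eps/2)) as [M HM]; [lra|].
set (M' := Rmax M 0). assert (M <= M' /\ 0 <= M') as [A1 A2] by (unfold M'; split; [apply Rmax_l|apply Rmax_r]).
exists M'; intros u v [[Hu Hv]|[Hu Hv]].
- rewrite (chasles g u M' v Cg), (RInt_sw g v M' Cg).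
  assert (B1 := HM u M' ltac:(lra) ltac:(lra)). assert (B2 := HM v M' ltac:(lra) ltac:(lra)).
  revert B1 B2; unfold Rabs; repeat destruct Rcase_abs; lra.
- rewrite (chasles g u (-M') v Cg), (RInt_sw g (-M') u Cg).
  assert (B1 := HM (-M') u ltac:(lra) ltac:(lra)). assert (B2 := HM (-M') v ltac:(lra) ltac:(lra)).
  revert B1 B2; unfold Rabs; repeat destruct Rcase_abs; lra.
Qed.

Lemma RInt_abs_dom g h u v : cont g -> cont h -> (forall x, Rabs (g x) <= h x) ->
  Rabs (RInt g u v) <= Rabs (RInt h u v).
Proof.
intros Cg Ch D.
assert (Cn : cont (fun x => - h x)).
{ intros x. apply (continuous_opp h x (Ch x)). }
assert (K : forall a b, a <= b -> Rabs (RInt g a b) <= Rabs (RInt h a b)).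
{ intros a b ab.
  assert (E1 : RInt g a b <= RInt h a b).
  { apply RInt_le; try apply cont_ex; auto. intros x _; generalize (D x); unfold Rabs; destruct Rcase_abs; lra. }
  assert (E2 : RInt (fun x => - h x) a b <= RInt g a b).
  { apply RInt_le; try apply cont_ex; auto. intros x _; generalize (D x); unfold Rabs; destruct Rcase_abs; lra. }
  assert (E3 : RInt (fun x => - h x) a b = - RInt h a b).
  { apply (RInt_opp h a b); apply cont_ex; auto. }
  rewrite E3 in E2. revert E1 E2; unfold Rabs; repeat destruct Rcase_abs; lra. }
destruct (Rle_or_lt u v) as [uv|vu]; [apply K; auto|].
rewrite (RInt_sw g v u Cg), (RInt_sw h v u Ch), !Rabs_Ropp. apply K; lra.
Qed.

Lemma tails_dom g h : cont g -> cont h -> (forall x, Rabs (g x) <= h x) -> tails h -> tails g.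
Proof.
intros Cg Ch D T eps Heps. destruct (T eps Heps) as [M HM]. exists M; intros u v P.
eapply Rle_lt_trans; [apply (RInt_abs_dom g h u v Cg Ch D)| apply HM; auto].
Qed.

Lemma tails_iint g : cont g -> tails g -> exists L, iint g L.
Proof.
intros Cg T.
set (S := fun n : nat => RInt g (- INR n) (INR n)).
assert (Cc : Cauchy_crit S).
{ intros eps Heps. destruct (T (eps/2)) as [M HM]; [lra|].
  destruct (INR_archimed 1 M) as [N HN]; [lra|]. rewrite Rmult_1_r in HN.
  exists N; intros n m Hn Hm. unfold R_dist, S.
  apply le_INR in Hn; apply le_INR in Hm.
  rewrite (chasles g (- INR n) (- INR m) (INR n) Cg), (chasles g (- INR m) (INR m) (INR n) Cg).
  assert (B1 := HM (- INR n) (- INR m) ltac:(left; lra)). assert (B2 := HM (INR m) (INR n) ltac:(right; lra)).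
  revert B1 B2; unfold Rabs; repeat destruct Rcase_abs; lra. }
destruct (Rcomplete.R_complete S Cc) as [L HL]. exists L.
intros eps Heps. destruct (T (eps/3)) as [M HM]; [lra|].
destruct (HL (eps/3)) as [N HN]; [lra|].
destruct (INR_archimed 1 (Rmax M 0)) as [N2 HN2]; [lra|]. rewrite Rmult_1_r in HN2.
set (n := (N + N2)%nat).
assert (Hn : (n >= N)%nat) by (unfold n; lia).
assert (Hn2 : INR N2 <= INR n) by (apply le_INR; unfold n; lia).
assert (M <= INR n /\ 0 <= INR n) as [C1 C2] by (generalize (Rmax_l M 0) (Rmax_r M 0); lra).
exists (INR n); intros lo hi Hlo Hhi.
rewrite (chasles g lo (- INR n) hi Cg), (chasles g (- INR n) (INR n) hi Cg).
assert (B1 := HM lo (- INR n) ltac:(left; lra)). assert (B2 := HM (INR n) hi ltac:(right; lra)).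
assert (B3 := HN n Hn). unfold R_dist, S in B3.
revert B1 B2 B3; unfold Rabs; repeat destruct Rcase_abs; lra.
Qed.

Lemma iint_dom g h L : cont g -> cont h -> (forall x, Rabs (g x) <= h x) -> iint h L ->
  exists L', iint g L'.
Proof.
intros Cg Ch D H. apply tails_iint; auto. apply (tails_dom g h); auto. apply (iint_tails h L); auto.
Qed.

Definition ge (u : R) := exp (- (u * u)).
Definition Gf (x : R) := RInt ge 0 x.

Lemma cont_of_der (f : R -> R) : (forall x, ex_derive f x) -> cont f.
Proof. intros H x; apply (@ex_derive_continuous R_AbsRing R_NormedModule); apply H. Qed.

Lemma cont_ge : cont ge.
Proof. apply cont_of_der; intros x; unfold ge; auto_derive; auto. Qed.

Lemma Gf_deriv x : is_derive Gf x (ge x).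
Proof.
apply (is_derive_RInt ge Gf 0 x); [|apply cont_ge].
apply filter_forall; intros y; apply (@RInt_correct R_CompleteNormedModule), cont_ex, cont_ge.
Qed.

Lemma Gf0 : Gf 0 = 0.
Proof. unfold Gf; rewrite RInt_point; reflexivity. Qed.

Lemma Gf_ge0 x : 0 <= x -> 0 <= Gf x.
Proof.
intros Hx; unfold Gf; apply RInt_ge_0; auto. apply cont_ex, cont_ge.
intros; unfold ge; left; apply exp_pos.
Qed.

Lemma Gf_odd x : Gf (- x) = - Gf x.
Proof.
unfold Gf.
assert (E := RInt_comp_lin ge (-1) 0 0 x).
replace (-1 * 0 + 0) with 0 in E by ring. replace (-1 * x + 0) with (-x) in E by ring.
rewrite <- E by (apply cont_ex, cont_ge).
change (- RInt ge 0 x) with (opp (RInt ge 0 x)).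
rewrite <- (RInt_opp ge 0 x) by (apply cont_ex, cont_ge).
apply RInt_ext; intros y _. unfold scal, opp; simpl; unfold mult; simpl. unfold ge.
replace (-(( -1 * y + 0) * (-1 * y + 0))) with (- (y*y)) by ring. ring.
Qed.

Lemma Gf_pinf_eps : forall eps, 0 < eps -> exists M, forall x, M < x ->
  Rabs (Gf x - sqrt PI / 2) < eps.
Proof.
intros eps Heps.
set (r := sqrt PI / 2).
assert (rpos : 0 < r) by (unfold r; generalize (sqrt_lt_R0 PI PI_RGT_0); lra).
assert (r2 : r * r = PI / 4).
{ unfold r. replace (sqrt PI / 2 * (sqrt PI / 2)) with (sqrt PI * sqrt PI / 4) by field.
  rewrite sqrt_sqrt; [reflexivity| generalize PI_RGT_0; lra]. }
destruct (@MCB.gauss_sq_lim Gf (fun x => proj1 (is_derive_Reals Gf x (ge x)) (Gf_deriv x)) Gf0 (eps * r))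
  as [M HM]; [apply Rmult_lt_0_compat; auto|].
exists (Rmax M 0); intros x Hx.
assert (xM : M < x) by (generalize (Rmax_l M 0); lra).
assert (x0 : 0 <= x) by (generalize (Rmax_r M 0); lra).
specialize (HM x xM). rewrite <- r2 in HM.
assert (G0 := Gf_ge0 x x0).
replace (Gf x * Gf x - r * r) with ((Gf x - r) * (Gf x + r)) in HM by ring.
rewrite Rabs_mult in HM. rewrite (Rabs_pos_eq (Gf x + r)) in HM by lra.
apply Rmult_lt_reg_r with r; auto.
apply Rle_lt_trans with (Rabs (Gf x - r) * (Gf x + r)); auto.
apply Rmult_le_compat_l; [apply Rabs_pos| lra].
Qed.

Lemma Gf_pinf : is_lim Gf p_infty (sqrt PI / 2).
Proof.
apply is_lim_spec; intros eps. destruct (Gf_pinf_eps eps (cond_pos eps)) as [M HM].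
exists M; auto.
Qed.

Lemma Gf_minf : is_lim Gf m_infty (- (sqrt PI / 2)).
Proof.
apply is_lim_spec; intros eps. destruct (Gf_pinf_eps eps (cond_pos eps)) as [M HM].
exists (-M); intros x Hx. replace x with (- - x) by ring. rewrite Gf_odd.
replace (- Gf (- x) - - (sqrt PI / 2)) with (- (Gf (-x) - sqrt PI / 2)) by ring.
rewrite Rabs_Ropp; apply HM; lra.
Qed.

Notation gd := gauss_density.

Lemma sq2PIs_pos s : 0 < s -> 0 < sqrt (2 * PI * s).
Proof. intros; apply sqrt_lt_R0; generalize PI_RGT_0; nra. Qed.

Lemma gd_pos c s x : 0 < s -> 0 < gd c s x.
Proof. intros; unfold gd, gauss_density; apply Rdiv_lt_0_compat; [apply exp_pos|apply sq2PIs_pos; auto]. Qed.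

Lemma gd_deriv c s x : 0 < s -> is_derive (gd c s) x (-(x-c)/s * gd c s x).
Proof.
intros hs. assert (P := sq2PIs_pos s hs). unfold gauss_density.
auto_derive. { lra. }
replace (- ((x + - c) * ((x + - c) * 1)) * / (2 * s)) with (- (x - c) ^ 2 / (2 * s)) by (field; lra).
field; lra.
Qed.

Lemma gd_cont c s : 0 < s -> cont (gd c s).
Proof. intros hs; apply cont_of_der; intros x; eexists; apply gd_deriv; auto. Qed.

Definition Pc c s x := Gf ((x - c) / sqrt (2 * s)) / sqrt PI.

Lemma Pc_deriv c s x : 0 < s -> is_derive (Pc c s) x (gd c s x).
Proof.
intros hs.
assert (k0 : 0 < sqrt (2 * s)) by (apply sqrt_lt_R0; lra).
assert (p0 : 0 < sqrt PI) by (apply sqrt_lt_R0, PI_RGT_0).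
assert (D1 : is_derive (fun x => (x - c) / sqrt (2 * s)) x (/ sqrt (2 * s))).
{ auto_derive; [lra| field; lra]. }
assert (D2 := is_derive_comp Gf (fun x => (x - c) / sqrt (2 * s)) x _ _ (Gf_deriv _) D1).
assert (D3 := is_derive_scal _ x (/ sqrt PI) _ D2).
assert (EE : forall t, / sqrt PI * Gf ((t - c) / sqrt (2 * s)) = Pc c s t) by (intros; unfold Pc, Rdiv; ring).
apply (is_derive_ext _ _ x _ EE) in D3.
replace (gd c s x) with (/ sqrt PI * scal (/ sqrt (2 * s)) (ge ((x - c) / sqrt (2 * s)))); [exact D3|].
unfold scal; simpl; unfold mult; simpl. unfold ge, gauss_density.
replace (- ((x - c) / sqrt (2 * s) * ((x - c) / sqrt (2 * s)))) with (- (x - c) ^ 2 / (2 * s)).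
2:{ replace ((x - c) / sqrt (2 * s) * ((x - c) / sqrt (2 * s))) with ((x - c) * (x - c) / (sqrt (2 * s) * sqrt (2 * s))) by (field; lra).
    rewrite sqrt_sqrt; [field|]; lra. }
assert (S1 : sqrt (2 * PI * s) = sqrt 2 * sqrt PI * sqrt s).
{ rewrite !sqrt_mult; try lra; generalize PI_RGT_0; nra. }
assert (S2 : sqrt (2 * s) = sqrt 2 * sqrt s) by (rewrite sqrt_mult; lra).
rewrite S1, S2.
assert (0 < sqrt 2) by (apply sqrt_lt_R0; lra). assert (0 < sqrt s) by (apply sqrt_lt_R0; lra).
field; lra.
Qed.

Lemma lim_aff_p c k : 0 < k -> is_lim (fun x => (x - c) / k) p_infty p_infty.
Proof.
intros hk; apply is_lim_spec; intros M. exists (M * k + c); intros x Hx.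
apply Rmult_lt_reg_r with k; auto. unfold Rdiv; rewrite Rmult_assoc, Rinv_l; lra.
Qed.

Lemma lim_aff_m c k : 0 < k -> is_lim (fun x => (x - c) / k) m_infty m_infty.
Proof.
intros hk; apply is_lim_spec; intros M. exists (M * k + c); intros x Hx.
apply Rmult_lt_reg_r with k; auto. unfold Rdiv; rewrite Rmult_assoc, Rinv_l; lra.
Qed.

Lemma is_lim_finite_eq f x (l l' : R) : is_lim f x l -> l = l' -> is_lim f x l'.
Proof. intros H ->; auto. Qed.

Lemma Pc_pinf c s : 0 < s -> is_lim (Pc c s) p_infty (1/2).
Proof.
intros hs. assert (k0 : 0 < sqrt (2 * s)) by (apply sqrt_lt_R0; lra).
assert (p0 : 0 < sqrt PI) by (apply sqrt_lt_R0, PI_RGT_0).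
assert (H := is_lim_comp Gf (fun x => (x - c) / sqrt (2 * s)) p_infty (sqrt PI / 2) p_infty Gf_pinf (lim_aff_p c _ k0)).
assert (H' : is_lim (fun x => Gf ((x - c) / sqrt (2 * s))) p_infty (sqrt PI / 2)).
{ apply H. exists 0; intros; discriminate. }
apply (is_lim_scal_r _ (/ sqrt PI)) in H'.
apply (is_lim_finite_eq _ _ (sqrt PI / 2 * / sqrt PI)).
- eapply is_lim_ext; [|exact H']. intros; unfold Pc; simpl; reflexivity.
- field; lra.
Qed.

Lemma Pc_minf c s : 0 < s -> is_lim (Pc c s) m_infty (-(1/2)).
Proof.
intros hs. assert (k0 : 0 < sqrt (2 * s)) by (apply sqrt_lt_R0; lra).
assert (p0 : 0 < sqrt PI) by (apply sqrt_lt_R0, PI_RGT_0).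
assert (H := is_lim_comp Gf (fun x => (x - c) / sqrt (2 * s)) m_infty (- (sqrt PI / 2)) m_infty Gf_minf (lim_aff_m c _ k0)).
assert (H' : is_lim (fun x => Gf ((x - c) / sqrt (2 * s))) m_infty (- (sqrt PI / 2))).
{ apply H. exists 0; intros; discriminate. }
apply (is_lim_scal_r _ (/ sqrt PI)) in H'.
apply (is_lim_finite_eq _ _ (- (sqrt PI / 2) * / sqrt PI)).
- eapply is_lim_ext; [|exact H']. intros; unfold Pc; simpl; reflexivity.
- field; lra.
Qed.

Lemma lim0_bound (F : R -> R) c K : (forall x, Rabs (F x) * Rabs (x - c) <= K) ->
  is_lim F p_infty 0 /\ is_lim F m_infty 0.
Proof.
intros H.
assert (K0 : 0 <= K) by (specialize (H c); replace (c - c) with 0 in H by ring;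
  rewrite Rabs_R0, Rmult_0_r in H; auto).
assert (Main : forall eps : posreal, forall x, Rabs (x - c) > K / eps -> Rabs (F x - 0) < eps).
{ intros eps x Hx. rewrite Rminus_0_r.
  assert (ep := cond_pos eps).
  assert (Kx : K < eps * Rabs (x - c)).
  { apply Rmult_lt_compat_l with (r := eps) in Hx; auto.
    replace (eps * (K / eps)) with K in Hx by (field; lra). lra. }
  assert (xc : 0 < Rabs (x - c)) by (apply Rle_lt_trans with (K / eps); [apply Rdiv_le_0_compat|]; lra).
  apply Rmult_lt_reg_r with (Rabs (x - c)); auto. specialize (H x). lra. }
split; apply is_lim_spec; intros eps.
- exists (Rabs c + K / eps); intros x Hx. apply Main.
  unfold Rabs at 1; destruct Rcase_abs; generalize (Rabs_pos c) (Rle_abs c) ; lra.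
- exists (- Rabs c - K / eps); intros x Hx. apply Main.
  unfold Rabs at 1; destruct Rcase_abs; generalize (Rabs_pos c) (Rle_abs (-c)) (Rabs_Ropp c); lra.
Qed.

Lemma exp_neg_bound y : 0 <= y -> exp (- y) * (1 + y) <= 1.
Proof.
intros hy. assert (E := exp_ineq1_le y). assert (P := exp_pos y).
rewrite exp_Ropp. apply Rmult_le_reg_l with (exp y); auto.
rewrite <- Rmult_assoc, Rinv_r by lra. lra.
Qed.

Lemma gd_alt c s x : 0 < s -> gd c s x * sqrt (2 * PI * s) = exp (- ((x - c)^2 / (2 * s))).
Proof.
intros hs; assert (P := sq2PIs_pos s hs). unfold gauss_density.
replace (- (x - c) ^ 2 / (2 * s)) with (- ((x - c) ^ 2 / (2 * s))) by (field; lra). field; lra.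
Qed.

Lemma gd_bound1 c s x : 0 < s -> Rabs (gd c s x) * Rabs (x - c) <= (1 + 2 * s) / sqrt (2 * PI * s).
Proof.
intros hs. assert (P := sq2PIs_pos s hs). assert (G := gd_pos c s x hs).
set (y := (x - c)^2 / (2 * s)).
assert (y0 : 0 <= y) by (unfold y; apply Rdiv_le_0_compat; [apply pow2_ge_0| lra]).
assert (B := exp_neg_bound y y0). unfold y in B. rewrite <- (gd_alt c s x hs) in B. fold y in B.
rewrite (Rabs_pos_eq (gd c s x)) by lra.
apply Rmult_le_reg_r with (sqrt (2 * PI * s)); auto.
replace ((1 + 2 * s) / sqrt (2 * PI * s) * sqrt (2 * PI * s)) with (1 + 2 * s) by (field; lra).
assert (A : Rabs (x - c) <= (1 + 2 * s) * (1 + y)).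
{ unfold y. assert (Q : Rabs (x - c) <= 1 + (x - c)^2).
  { generalize (x - c); intro z; unfold Rabs; destruct Rcase_abs; simpl; nra. }
  apply Rle_trans with (1 + (x-c)^2); auto.
  assert (0 <= (x - c)^2) by apply pow2_ge_0.
  replace ((1 + 2 * s) * (1 + (x - c) ^ 2 / (2 * s))) with (1 + 2 * s + (x - c)^2 / (2 * s) + (x-c)^2) by (field; lra).
  assert (0 <= (x - c)^2 / (2 * s)) by (apply Rdiv_le_0_compat; lra). lra. }
assert (0 <= gd c s x * sqrt (2 * PI * s)) by nra.
nra.
Qed.

Lemma gd_bound2 c s x : 0 < s -> Rabs ((x - c) * gd c s x) * Rabs (x - c) <= 2 * s / sqrt (2 * PI * s).
Proof.
intros hs. assert (P := sq2PIs_pos s hs). assert (G := gd_pos c s x hs).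
set (y := (x - c)^2 / (2 * s)).
assert (y0 : 0 <= y) by (unfold y; apply Rdiv_le_0_compat; [apply pow2_ge_0| lra]).
assert (B := exp_neg_bound y y0). unfold y in B. rewrite <- (gd_alt c s x hs) in B. fold y in B.
rewrite Rabs_mult, (Rabs_pos_eq (gd c s x)) by lra.
replace (Rabs (x - c) * gd c s x * Rabs (x - c)) with ((x - c)^2 * gd c s x).
2:{ generalize (x - c); intro z; unfold Rabs; destruct Rcase_abs; simpl; ring. }
apply Rmult_le_reg_r with (sqrt (2 * PI * s)); auto.
replace (2 * s / sqrt (2 * PI * s) * sqrt (2 * PI * s)) with (2 * s) by (field; lra).
assert (A : (x - c)^2 = 2 * s * y) by (unfold y; field; lra).
rewrite A. assert (0 <= gd c s x * sqrt (2 * PI * s)) by nra. nra.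
Qed.

Lemma cont_plus f g : cont f -> cont g -> cont (fun x => f x + g x).
Proof. intros Hf Hg x; apply (continuous_plus f g x (Hf x) (Hg x)). Qed.
Lemma cont_mult f g : cont f -> cont g -> cont (fun x => f x * g x).
Proof. intros Hf Hg x; apply (@continuous_mult R_UniformSpace R_AbsRing f g x (Hf x) (Hg x)). Qed.
Lemma cont_const k : cont (fun _ => k).
Proof. intros x; apply continuous_const. Qed.
Lemma cont_id : cont (fun x => x).
Proof. intros x; apply continuous_id. Qed.
Lemma cont_ext f g : (forall x, f x = g x) -> cont f -> cont g.
Proof. intros E H x. apply (continuous_ext f g x E (H x)). Qed.

Lemma der_eq (f : R -> R) (x a b : R) : is_derive f x a -> a = b -> is_derive f x b.
Proof. intros H ->; auto. Qed.
Lemma der_plus (f g : R -> R) (x a b : R) : is_derive f x a -> is_derive g x b -> is_derive (fun x => f x + g x) x (a + b).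
Proof. intros; apply (is_derive_plus f g x a b); auto. Qed.
Lemma der_mult (f g : R -> R) (x a b : R) : is_derive f x a -> is_derive g x b ->
  is_derive (fun x => f x * g x) x (a * g x + f x * b).
Proof. intros; apply (is_derive_mult f g x a b); auto. intros; apply Rmult_comm. Qed.
Lemma der_scal (f : R -> R) (x k a : R) : is_derive f x a -> is_derive (fun x => k * f x) x (k * a).
Proof. intros; apply is_derive_scal; auto. Qed.
Lemma der_lin (x c : R) : is_derive (fun x => x - c) x 1.
Proof. auto_derive; auto; ring. Qed.

Lemma iint_eq g L L' : iint g L -> L = L' -> iint g L'.
Proof. intros H ->; auto. Qed.

Lemma gd_lim c s : 0 < s -> is_lim (gd c s) p_infty 0 /\ is_lim (gd c s) m_infty 0.
Proof. intros hs; apply (lim0_bound _ c _ (fun x => gd_bound1 c s x hs)). Qed.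

Lemma xgd_lim c s : 0 < s -> is_lim (fun x => (x - c) * gd c s x) p_infty 0 /\
   is_lim (fun x => (x - c) * gd c s x) m_infty 0.
Proof. intros hs; apply (lim0_bound _ c _ (fun x => gd_bound2 c s x hs)). Qed.

Lemma is_lim_scal0 f x k : is_lim f x 0 -> is_lim (fun y => k * f y) x 0.
Proof.
intros H; apply (is_lim_scal_l _ k) in H. apply (is_lim_finite_eq _ _ (k * 0)); [exact H| ring].
Qed.

Lemma cont_xgd c s : 0 < s -> cont (fun x => (x - c) * gd c s x).
Proof. intros hs; apply cont_mult; [apply (cont_plus _ _ cont_id (cont_const _))|apply gd_cont; auto]. Qed.

Lemma cont_x2gd c s : 0 < s -> cont (fun x => (x - c)^2 * gd c s x).
Proof.
intros hs; apply (cont_ext (fun x => (x - c) * ((x - c) * gd c s x))); [intros; simpl; ring|].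
apply cont_mult; [apply (cont_plus _ _ cont_id (cont_const _))|apply cont_xgd; auto].
Qed.

Lemma mom0 c s : 0 < s -> iint (gd c s) 1.
Proof.
intros hs. apply (iint_eq _ (1/2 - - (1/2))); [|field].
apply (iint_antider _ (Pc c s)); [apply gd_cont; auto| intros; apply Pc_deriv; auto| apply Pc_pinf; auto| apply Pc_minf; auto].
Qed.

Lemma mom1 c s : 0 < s -> iint (fun x => (x - c) * gd c s x) 0.
Proof.
intros hs. apply (iint_eq _ (0 - 0)); [|ring].
destruct (gd_lim c s hs) as [L1 L2].
apply (iint_antider _ (fun x => - s * gd c s x)).
- apply cont_xgd; auto.
- intros x. eapply der_eq; [apply der_scal, gd_deriv; auto| field; lra].
- apply is_lim_scal0; auto.
- apply is_lim_scal0; auto.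
Qed.

Lemma mom2 c s : 0 < s -> iint (fun x => (x - c)^2 * gd c s x) s.
Proof.
intros hs. apply (iint_eq _ ((s * (1/2) + - s * 0) - (s * (- (1/2)) + - s * 0))); [|field].
destruct (xgd_lim c s hs) as [L1 L2].
apply (iint_antider _ (fun x => s * Pc c s x + - s * ((x - c) * gd c s x))).
- apply cont_x2gd; auto.
- intros x. eapply der_eq.
  + apply der_plus; apply der_scal; [apply Pc_deriv; auto|].
    apply der_mult; [apply der_lin| apply gd_deriv; auto].
  + simpl; field; lra.
- apply (is_lim_plus' (fun x => s * Pc c s x) (fun x => - s * ((x - c) * gd c s x)) p_infty (s * (1/2)) (- s * 0)).
  + exact (is_lim_scal_l _ s _ _ (Pc_pinf c s hs)).
  + exact (is_lim_scal_l _ (-s) _ _ L1).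
- apply (is_lim_plus' (fun x => s * Pc c s x) (fun x => - s * ((x - c) * gd c s x)) m_infty (s * (- (1/2))) (- s * 0)).
  + exact (is_lim_scal_l _ s _ _ (Pc_minf c s hs)).
  + exact (is_lim_scal_l _ (-s) _ _ L2).
Qed.

Lemma ln_ineq v : 0 <= v -> v - v^2/2 <= ln (1 + v).
Proof.
intros hv.
destruct (Req_dec v 0) as [->|vn0].
{ rewrite Rplus_0_r, ln_1; lra. }
set (k := fun w => ln (1 + w) - w + w^2/2).
assert (D : forall w, 0 <= w -> is_derive k w (w^2 / (1 + w))).
{ intros w hw; unfold k. auto_derive; [lra| field; lra]. }
destruct (MVT_gen k 0 v (fun w => w^2 / (1 + w))) as [c [Hc E]].
- intros x Hx. apply D. rewrite Rmin_left in Hx by lra. lra.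
- intros x Hx. rewrite Rmin_left in Hx by lra. apply derivable_continuous_pt.
  exists (x^2 / (1 + x)). apply is_derive_Reals, D; lra.
- rewrite Rmin_left in Hc by lra. rewrite Rmax_right in Hc by lra.
  unfold k in E. rewrite Rplus_0_r, ln_1 in E.
  assert (0 <= c^2 / (1 + c)) by (apply Rdiv_le_0_compat; [apply pow2_ge_0|lra]).
  assert (0 <= c^2 / (1 + c) * (v - 0)) by (apply Rmult_le_pos; lra).
  simpl in E. lra.
Qed.

Lemma key_ineq s : 0 < s <= 1 -> / (2 * s) - / 2 + ln s / 2 <= / 4 * (/ s - 1) ^ 2.
Proof.
intros [hs hs1].
set (v := / s - 1).
assert (v0 : 0 <= v) by (unfold v; assert (1 <= / s) by (rewrite <- Rinv_1; apply Rinv_le_contravar; lra); lra).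
assert (L := ln_ineq v v0).
assert (E : ln s = - ln (1 + v)).
{ unfold v. replace (1 + (/ s - 1)) with (/ s) by ring. rewrite ln_Rinv; [ring|lra]. }
rewrite E. replace (/ (2 * s)) with ((1 + v) / 2) by (unfold v; field; lra).
simpl in *. lra.
Qed.

Definition dif (f : R -> R) := forall x, ex_derive f x.

Lemma dif_cont f : dif f -> cont f.
Proof. intros H; apply cont_of_der; auto. Qed.
Lemma dif_plus f g : dif f -> dif g -> dif (fun x => f x + g x).
Proof. intros Hf Hg x; apply (ex_derive_plus f g x (Hf x) (Hg x)). Qed.
Lemma dif_mult f g : dif f -> dif g -> dif (fun x => f x * g x).
Proof. intros Hf Hg x; apply (ex_derive_mult f g x (Hf x) (Hg x)). Qed.
Lemma dif_const k : dif (fun _ => k).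
Proof. intros x; apply ex_derive_const. Qed.
Lemma dif_id : dif (fun x => x).
Proof. intros x; apply ex_derive_id. Qed.
Lemma dif_inv f : dif f -> (forall x, f x <> 0) -> dif (fun x => / f x).
Proof. intros Hf N x; apply (ex_derive_inv f x (Hf x) (N x)). Qed.
Lemma dif_ln f : dif f -> (forall x, 0 < f x) -> dif (fun x => ln (f x)).
Proof.
intros Hf P x. destruct (Hf x) as [l Hl]. eexists.
apply (is_derive_comp ln f x); [|exact Hl].
apply is_derive_Reals, derivable_pt_lim_ln; auto.
Qed.
Lemma dif_ext f g : (forall x, f x = g x) -> dif f -> dif g.
Proof. intros E H x; apply (ex_derive_ext f g x E (H x)). Qed.
Lemma dif_gd c s : 0 < s -> dif (gd c s).
Proof. intros hs x; eexists; apply gd_deriv; auto. Qed.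

Definition qf s c x := x - (x - c) / s.
Definition Nf a b s t x := (1 - t) * qf s a x * gd a s x + t * qf s b x * gd b s x.
Definition fp a b s t x := Nf a b s t x / gd 0 1 x.

Lemma mix_pos a b s t x : 0 < s -> 0 <= t <= 1 -> 0 < mixture_density a b s t x.
Proof.
intros hs ht. unfold mixture_density.
assert (P1 := gd_pos a s x hs). assert (P2 := gd_pos b s x hs).
destruct (Req_dec t 1) as [->|tn1].
- nra.
- assert (0 < (1 - t) * gd a s x) by (apply Rmult_lt_0_compat; lra). nra.
Qed.

Lemma rel_deriv a b s t x : 0 < s ->
  derivable_pt_lim (rel_density a b s t) x (fp a b s t x).
Proof.
intros hs. apply is_derive_Reals.
assert (P0 := gd_pos 0 1 x ltac:(lra)).
unfold rel_density, mixture_density.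
eapply der_eq.
- apply is_derive_div; [| apply gd_deriv; lra| lra].
  apply der_plus; apply der_scal; apply gd_deriv; auto.
- unfold fp, Nf, qf. field. split; [lra|]. lra.
Qed.

Lemma cont_scal g k : cont g -> cont (fun x => k * g x).
Proof. intros; apply cont_mult; [apply cont_const| auto]. Qed.

Lemma iint_comb3 c s k0 k1 k2 : 0 < s ->
  iint (fun x => k0 * gd c s x + k1 * ((x - c) * gd c s x) + k2 * ((x - c)^2 * gd c s x)) (k0 + k2 * s).
Proof.
intros hs. apply (iint_eq _ (k0 * 1 + k1 * 0 + k2 * s)); [|ring].
assert (C0 := gd_cont c s hs). assert (C1 := cont_xgd c s hs). assert (C2 := cont_x2gd c s hs).
apply iint_plus; [apply cont_plus; apply cont_scal; auto| apply cont_scal; auto| |].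
- apply iint_plus; try (apply cont_scal; auto); apply iint_scal; auto; [apply mom0|apply mom1]; auto.
- apply iint_scal; auto; apply mom2; auto.
Qed.

Lemma cont_comb3 c s k0 k1 k2 : 0 < s ->
  cont (fun x => k0 * gd c s x + k1 * ((x - c) * gd c s x) + k2 * ((x - c)^2 * gd c s x)).
Proof.
intros hs. assert (C0 := gd_cont c s hs). assert (C1 := cont_xgd c s hs). assert (C2 := cont_x2gd c s hs).
repeat apply cont_plus; apply cont_scal; auto.
Qed.

Definition U1 a b s t x := (1 - t) * (qf s a x ^ 2 * gd a s x) + t * (qf s b x ^ 2 * gd b s x).
Definition V1 a b s t := (1 - t) * (a^2 + (1 - /s)^2 * s) + t * (b^2 + (1 - /s)^2 * s).

Lemma qsq_iint c s : 0 < s -> iint (fun x => qf s c x ^ 2 * gd c s x) (c^2 + (1 - /s)^2 * s).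
Proof.
intros hs. eapply iint_ext; [| apply (iint_comb3 c s (c^2) (2 * c * (1 - /s)) ((1 - /s)^2)); auto].
intros x; unfold qf; simpl; field; lra.
Qed.

Lemma qsq_cont c s : 0 < s -> cont (fun x => qf s c x ^ 2 * gd c s x).
Proof.
intros hs. eapply cont_ext; [| apply (cont_comb3 c s (c^2) (2 * c * (1 - /s)) ((1 - /s)^2)); auto].
intros x; unfold qf; simpl; field; lra.
Qed.

Lemma U1_cont a b s t : 0 < s -> cont (U1 a b s t).
Proof. intros hs; unfold U1; apply cont_plus; apply cont_scal; apply qsq_cont; auto. Qed.

Lemma U1_iint a b s t : 0 < s -> iint (U1 a b s t) (V1 a b s t).
Proof.
intros hs; unfold U1, V1. apply iint_plus; try (apply cont_scal, qsq_cont; auto);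
apply iint_scal; try apply qsq_cont; auto; apply qsq_iint; auto.
Qed.

Definition J1 a b s t x := (fp a b s t x / rel_density a b s t x) ^ 2 * mixture_density a b s t x.

Lemma J1_eq a b s t x : 0 < s -> 0 <= t <= 1 ->
  J1 a b s t x = Nf a b s t x * Nf a b s t x * / mixture_density a b s t x.
Proof.
intros hs ht. assert (P0 := gd_pos 0 1 x ltac:(lra)). assert (M := mix_pos a b s t x hs ht).
unfold J1, fp, rel_density. field. lra.
Qed.

Lemma dif_qf s c : 0 < s -> dif (qf s c).
Proof.
intros hs. apply (dif_ext (fun x => (1 - / s) * x + c / s)).
- intros; unfold qf; field; lra.
- apply dif_plus; [apply dif_mult; [apply dif_const|apply dif_id]|apply dif_const].
Qed.

Lemma dif_Nf a b s t : 0 < s -> dif (Nf a b s t).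
Proof.
intros hs; unfold Nf.
apply (dif_plus (fun x => (1 - t) * qf s a x * gd a s x) (fun x => t * qf s b x * gd b s x)).
- apply (dif_mult (fun x => (1 - t) * qf s a x) (gd a s)); [|apply dif_gd; auto].
  apply (dif_mult (fun _ => 1 - t) (qf s a)); [apply dif_const| apply dif_qf; auto].
- apply (dif_mult (fun x => t * qf s b x) (gd b s)); [|apply dif_gd; auto].
  apply (dif_mult (fun _ => t) (qf s b)); [apply dif_const| apply dif_qf; auto].
Qed.

Lemma dif_mix a b s t : 0 < s -> dif (mixture_density a b s t).
Proof.
intros hs; unfold mixture_density.
apply (dif_plus (fun x => (1 - t) * gd a s x) (fun x => t * gd b s x)).
- apply (dif_mult (fun _ => 1 - t) (gd a s)); [apply dif_const| apply dif_gd; auto].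
- apply (dif_mult (fun _ => t) (gd b s)); [apply dif_const| apply dif_gd; auto].
Qed.

Lemma J1_cont a b s t : 0 < s -> 0 <= t <= 1 -> cont (J1 a b s t).
Proof.
intros hs ht. apply dif_cont. eapply dif_ext; [intros x; symmetry; apply J1_eq; auto|].
apply dif_mult; [apply dif_mult; apply dif_Nf; auto|].
apply dif_inv; [apply dif_mix; auto| intros x; apply Rgt_not_eq, mix_pos; auto].
Qed.

Lemma J1_bound a b s t x : 0 < s -> 0 <= t <= 1 ->
  0 <= J1 a b s t x <= U1 a b s t x.
Proof.
intros hs ht. rewrite J1_eq by auto. assert (M := mix_pos a b s t x hs ht).
assert (P1 := gd_pos a s x hs). assert (P2 := gd_pos b s x hs).
unfold U1, Nf. unfold mixture_density in *.
set (w1 := (1 - t) * gd a s x) in *. set (w2 := t * gd b s x) in *.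
set (q1 := qf s a x). set (q2 := qf s b x).
assert (w1p : 0 <= w1) by (unfold w1; apply Rmult_le_pos; lra).
assert (w2p : 0 <= w2) by (unfold w2; apply Rmult_le_pos; lra).
replace ((1 - t) * q1 * gd a s x + t * q2 * gd b s x) with (w1 * q1 + w2 * q2) by (unfold w1, w2; ring).
replace ((1 - t) * (q1 ^ 2 * gd a s x) + t * (q2 ^ 2 * gd b s x)) with (w1 * q1^2 + w2 * q2^2) by (unfold w1, w2; ring).
split.
- apply Rmult_le_pos; [apply Rle_0_sqr| left; apply Rinv_0_lt_compat; lra].
- apply Rmult_le_reg_r with (w1 + w2); [lra|].
  rewrite Rmult_assoc, Rinv_l by lra. rewrite Rmult_1_r.
  assert (0 <= w1 * w2 * (q1 - q2)^2) by (apply Rmult_le_pos; [apply Rmult_le_pos; auto| apply pow2_ge_0]).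
  assert (E : (w1 * q1 ^ 2 + w2 * q2 ^ 2) * (w1 + w2) - (w1 * q1 + w2 * q2) * (w1 * q1 + w2 * q2) = w1 * w2 * (q1 - q2)^2) by ring.
  lra.
Qed.

Definition J2 a b s t x := ln (rel_density a b s t x) * mixture_density a b s t x.
Definition Lc s c x := - (x - c)^2 / (2 * s) + x^2 / 2 - ln s / 2.

Lemma ln_sqrt' s : 0 < s -> ln (sqrt s) = ln s / 2.
Proof.
intros hs. assert (P := sqrt_lt_R0 s hs).
rewrite <- (sqrt_sqrt s) at 2 by lra. rewrite ln_mult by lra. field.
Qed.

Lemma ratio_eq c s x : 0 < s ->
  gd c s x / gd 0 1 x = exp (- (x - c)^2 / (2 * s) - - (x - 0)^2 / (2 * 1)) * / sqrt s.
Proof.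
intros hs. unfold gauss_density. unfold Rminus at 3. rewrite exp_plus, exp_Ropp.
assert (S1 : sqrt (2 * PI * s) = sqrt (2 * PI * 1) * sqrt s).
{ rewrite Rmult_1_r, sqrt_mult; auto; generalize PI_RGT_0; nra. }
rewrite S1. assert (0 < sqrt s) by (apply sqrt_lt_R0; lra).
assert (0 < sqrt (2 * PI * 1)) by (apply sqrt_lt_R0; generalize PI_RGT_0; nra).
assert (0 < exp (- (x - 0) ^ 2 / (2 * 1))) by apply exp_pos.
assert (0 < exp (- (x - c) ^ 2 / (2 * s))) by apply exp_pos.
try (replace (- - (x - 0) ^ 2 / (2 * 1)) with (- (- (x - 0) ^ 2 / (2 * 1))) by field;
rewrite exp_Ropp). field. repeat split; lra.
Qed.

Lemma ln_ratio c s x : 0 < s -> ln (gd c s x / gd 0 1 x) = Lc s c x.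
Proof.
intros hs. rewrite ratio_eq by auto. assert (0 < sqrt s) by (apply sqrt_lt_R0; lra).
rewrite ln_mult, ln_exp, ln_Rinv, ln_sqrt'; auto.
- unfold Lc. field. lra.
- apply exp_pos.
- apply Rinv_0_lt_compat; auto.
Qed.

Lemma rel_split a b s t x : 0 < s ->
  rel_density a b s t x = (1 - t) * (gd a s x / gd 0 1 x) + t * (gd b s x / gd 0 1 x).
Proof.
intros hs. assert (P0 := gd_pos 0 1 x ltac:(lra)).
unfold rel_density, mixture_density. field. lra.
Qed.

Lemma xlnx_0 : xlnx 0 = 0.
Proof. unfold xlnx; destruct Req_EM_T; [reflexivity| congruence]. Qed.

Lemma xlnx_pos w : 0 < w -> xlnx w = w * ln w.
Proof. intros; unfold xlnx; destruct Req_EM_T; [lra| reflexivity]. Qed.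

Lemma part_bound w p fc f L : 0 <= w -> 0 < p -> 0 < fc -> w * fc <= f -> ln fc = L ->
  w * (L * p) + xlnx w * p <= w * p * ln f.
Proof.
intros hw hp hf hle hL.
destruct (Req_dec w 0) as [->|wn0].
- rewrite xlnx_0; lra.
- rewrite xlnx_pos by lra.
  assert (wp : 0 < w) by lra.
  assert (Hl : ln (w * fc) <= ln f) by (apply ln_le; auto; apply Rmult_lt_0_compat; auto).
  rewrite ln_mult in Hl by auto. rewrite hL in Hl.
  assert (0 <= w * p) by (apply Rmult_le_pos; lra).
  replace (w * (L * p) + w * ln w * p) with (w * p * (ln w + L)) by ring.
  apply Rmult_le_compat_l; lra.
Qed.

Definition W2 a b s t x := (1 - t) * (Lc s a x * gd a s x) + xlnx (1 - t) * gd a s x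
  + (t * (Lc s b x * gd b s x) + xlnx t * gd b s x).

Lemma J2_lower a b s t x : 0 < s -> 0 <= t <= 1 -> W2 a b s t x <= J2 a b s t x.
Proof.
intros hs ht. unfold W2, J2. rewrite rel_split by auto.
assert (P0 := gd_pos 0 1 x ltac:(lra)). assert (P1 := gd_pos a s x hs). assert (P2 := gd_pos b s x hs).
assert (F1 : 0 < gd a s x / gd 0 1 x) by (apply Rdiv_lt_0_compat; auto).
assert (F2 : 0 < gd b s x / gd 0 1 x) by (apply Rdiv_lt_0_compat; auto).
set (f := (1 - t) * (gd a s x / gd 0 1 x) + t * (gd b s x / gd 0 1 x)).
unfold mixture_density.
replace (ln f * ((1 - t) * gd a s x + t * gd b s x)) with ((1 - t) * gd a s x * ln f + t * gd b s x * ln f) by ring.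
apply Rplus_le_compat.
- apply part_bound with (gd a s x / gd 0 1 x); auto; [lra| | apply ln_ratio; auto].
  unfold f. assert (0 <= t * (gd b s x / gd 0 1 x)) by (apply Rmult_le_pos; lra). lra.
- apply part_bound with (gd b s x / gd 0 1 x); auto; [lra| | apply ln_ratio; auto].
  unfold f. assert (0 <= (1 - t) * (gd a s x / gd 0 1 x)) by (apply Rmult_le_pos; lra). lra.
Qed.

Lemma ln_mix_bound t fa fb : 0 < fa -> 0 < fb -> 0 <= t <= 1 ->
  Rabs (ln ((1 - t) * fa + t * fb)) <= Rabs (ln fa) + Rabs (ln fb).
Proof.
intros ha hb ht. set (f := (1 - t) * fa + t * fb).
assert (Bnd : Rmin fa fb <= f <= Rmax fa fb).
{ unfold f, Rmin, Rmax; destruct Rle_dec; split; nra. }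
assert (m0 : 0 < Rmin fa fb) by (unfold Rmin; destruct Rle_dec; lra).
assert (L1 : ln (Rmin fa fb) <= ln f) by (apply ln_le; lra).
assert (L2 : ln f <= ln (Rmax fa fb)) by (apply ln_le; lra).
assert (A1 : Rabs (ln (Rmin fa fb)) <= Rabs (ln fa) + Rabs (ln fb)).
{ unfold Rmin; destruct Rle_dec; generalize (Rabs_pos (ln fa)) (Rabs_pos (ln fb)); lra. }
assert (A2 : Rabs (ln (Rmax fa fb)) <= Rabs (ln fa) + Rabs (ln fb)).
{ unfold Rmax; destruct Rle_dec; generalize (Rabs_pos (ln fa)) (Rabs_pos (ln fb)); lra. }
revert L1 L2 A1 A2. generalize (ln (Rmin fa fb)) (ln (Rmax fa fb)) (ln f) (Rabs (ln fa) + Rabs (ln fb)).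
intros u v w K L1 L2 A1 A2. unfold Rabs in *; repeat destruct Rcase_abs; lra.
Qed.

Definition Aconst a b s := (a^2 + b^2) / s + Rabs (ln s).
Definition Bconst s := 2 / s + 1.

Lemma Lc_bound1 s c x : 0 < s ->
  Rabs (Lc s c x) <= x^2 / s + c^2 / s + x^2 / 2 + Rabs (ln s) / 2.
Proof.
intros hs. unfold Lc. apply Rabs_le.
assert (H1 : (x - c)^2 / (2 * s) <= x^2 / s + c^2 / s).
{ replace (x^2 / s + c^2 / s) with (2 * (x^2 + c^2) / (2 * s)) by (field; lra).
  unfold Rdiv; apply Rmult_le_compat_r; [left; apply Rinv_0_lt_compat; lra|].
  assert (0 <= (x + c)^2) by apply pow2_ge_0. simpl in *; nra. }
assert (H2 : 0 <= (x - c)^2 / (2 * s)) by (apply Rdiv_le_0_compat; [apply pow2_ge_0| lra]).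
assert (H3 : 0 <= x^2 / s) by (apply Rdiv_le_0_compat; [apply pow2_ge_0| lra]).
assert (H4 : 0 <= c^2 / s) by (apply Rdiv_le_0_compat; [apply pow2_ge_0| lra]).
assert (H5 : 0 <= x^2) by apply pow2_ge_0.
assert (H6 := Rle_abs (ln s)). assert (H7 := Rle_abs (- ln s)). rewrite Rabs_Ropp in H7.
unfold Rdiv in *. split; lra.
Qed.

Lemma Lc_bound a b s x : 0 < s ->
  Rabs (Lc s a x) + Rabs (Lc s b x) <= Aconst a b s + Bconst s * x^2.
Proof.
intros hs. assert (B1 := Lc_bound1 s a x hs). assert (B2 := Lc_bound1 s b x hs).
unfold Aconst, Bconst.
replace ((a ^ 2 + b ^ 2) / s + Rabs (ln s) + (2 / s + 1) * x ^ 2) with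
  ((x^2 / s + a^2 / s + x^2 / 2 + Rabs (ln s) / 2) + (x^2 / s + b^2 / s + x^2 / 2 + Rabs (ln s) / 2)) by (field; lra).
lra.
Qed.

Definition H2f a b s x :=
  ((Aconst a b s + 2 * Bconst s * a^2) * gd a s x + 0 * ((x - a) * gd a s x) + (2 * Bconst s) * ((x - a)^2 * gd a s x))
+ ((Aconst a b s + 2 * Bconst s * b^2) * gd b s x + 0 * ((x - b) * gd b s x) + (2 * Bconst s) * ((x - b)^2 * gd b s x)).

Lemma J2_dom a b s t x : 0 < s -> 0 <= t <= 1 -> Rabs (J2 a b s t x) <= H2f a b s x.
Proof.
intros hs ht. unfold J2. rewrite rel_split by auto.
assert (P0 := gd_pos 0 1 x ltac:(lra)). assert (P1 := gd_pos a s x hs). assert (P2 := gd_pos b s x hs).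
assert (M := mix_pos a b s t x hs ht).
assert (F1 : 0 < gd a s x / gd 0 1 x) by (apply Rdiv_lt_0_compat; auto).
assert (F2 : 0 < gd b s x / gd 0 1 x) by (apply Rdiv_lt_0_compat; auto).
assert (LB := ln_mix_bound t _ _ F1 F2 ht). rewrite !ln_ratio in LB by auto.
assert (LC := Lc_bound a b s x hs).
rewrite Rabs_mult, (Rabs_pos_eq (mixture_density a b s t x)) by lra.
set (K := Aconst a b s + Bconst s * x^2).
assert (Bp : 0 <= Bconst s) by (unfold Bconst; assert (0 < 2 / s) by (apply Rdiv_lt_0_compat; lra); lra).
assert (Ap : 0 <= Aconst a b s).
{ unfold Aconst. assert (0 <= (a^2 + b^2) / s) by (apply Rdiv_le_0_compat; [generalize (pow2_ge_0 a) (pow2_ge_0 b); lra| lra]).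
  generalize (Rabs_pos (ln s)); lra. }
assert (Kp : 0 <= K) by (unfold K; generalize (pow2_ge_0 x); nra).
apply Rle_trans with (K * mixture_density a b s t x).
{ apply Rmult_le_compat_r; [lra| unfold K; lra]. }
apply Rle_trans with (K * (gd a s x + gd b s x)).
{ apply Rmult_le_compat_l; auto. unfold mixture_density. nra. }
unfold H2f, K.
assert (Xa : x^2 <= 2 * (x - a)^2 + 2 * a^2).
{ assert (Ea : 2 * (x - a)^2 + 2 * a^2 - x^2 = (x - 2 * a)^2) by ring. generalize (pow2_ge_0 (x - 2 * a)); lra. }
assert (Xb : x^2 <= 2 * (x - b)^2 + 2 * b^2).
{ assert (Eb : 2 * (x - b)^2 + 2 * b^2 - x^2 = (x - 2 * b)^2) by ring. generalize (pow2_ge_0 (x - 2 * b)); lra. }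
assert (Ea : (Aconst a b s + Bconst s * x ^ 2) * gd a s x <=
   (Aconst a b s + 2 * Bconst s * a ^ 2) * gd a s x + 0 * ((x - a) * gd a s x) + 2 * Bconst s * ((x - a) ^ 2 * gd a s x)).
{ replace ((Aconst a b s + 2 * Bconst s * a ^ 2) * gd a s x + 0 * ((x - a) * gd a s x) + 2 * Bconst s * ((x - a) ^ 2 * gd a s x))
   with ((Aconst a b s + Bconst s * (2 * (x - a)^2 + 2 * a^2)) * gd a s x) by ring.
  apply Rmult_le_compat_r; [lra|]. apply Rplus_le_compat_l, Rmult_le_compat_l; auto. }
assert (Eb : (Aconst a b s + Bconst s * x ^ 2) * gd b s x <=
   (Aconst a b s + 2 * Bconst s * b ^ 2) * gd b s x + 0 * ((x - b) * gd b s x) + 2 * Bconst s * ((x - b) ^ 2 * gd b s x)).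
{ replace ((Aconst a b s + 2 * Bconst s * b ^ 2) * gd b s x + 0 * ((x - b) * gd b s x) + 2 * Bconst s * ((x - b) ^ 2 * gd b s x))
   with ((Aconst a b s + Bconst s * (2 * (x - b)^2 + 2 * b^2)) * gd b s x) by ring.
  apply Rmult_le_compat_r; [lra|]. apply Rplus_le_compat_l, Rmult_le_compat_l; auto. }
lra.
Qed.

Definition VW a b s t := ((1 - t) * (a^2 / 2 - ln s / 2) + xlnx (1 - t)) + (1 - t) * (/ 2 - / (2 * s)) * s
  + ((t * (b^2 / 2 - ln s / 2) + xlnx t) + t * (/ 2 - / (2 * s)) * s).

Lemma W2_comb a b s t x : 0 < s -> W2 a b s t x =
  (((1 - t) * (a^2 / 2 - ln s / 2) + xlnx (1 - t)) * gd a s x + ((1 - t) * a) * ((x - a) * gd a s x)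
     + ((1 - t) * (/ 2 - / (2 * s))) * ((x - a)^2 * gd a s x))
+ (((t * (b^2 / 2 - ln s / 2) + xlnx t)) * gd b s x + (t * b) * ((x - b) * gd b s x)
     + (t * (/ 2 - / (2 * s))) * ((x - b)^2 * gd b s x)).
Proof. intros hs; unfold W2, Lc; field; lra. Qed.

Lemma W2_cont a b s t : 0 < s -> cont (W2 a b s t).
Proof.
intros hs. eapply cont_ext; [intros x; symmetry; apply W2_comb; auto|].
apply cont_plus; apply cont_comb3; auto.
Qed.

Lemma W2_iint a b s t : 0 < s -> iint (W2 a b s t) (VW a b s t).
Proof.
intros hs. eapply iint_ext; [intros x; symmetry; apply W2_comb; auto|].
unfold VW. apply iint_plus; try apply cont_comb3; auto; apply iint_comb3; auto.
Qed.

Lemma H2_cont a b s : 0 < s -> cont (H2f a b s).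
Proof. intros hs; unfold H2f; apply cont_plus; apply cont_comb3; auto. Qed.

Lemma H2_iint a b s : 0 < s -> exists L, iint (H2f a b s) L.
Proof.
intros hs; eexists; unfold H2f; apply iint_plus; try apply cont_comb3; auto; apply iint_comb3; auto.
Qed.

Lemma rel_pos a b s t x : 0 < s -> 0 <= t <= 1 -> 0 < rel_density a b s t x.
Proof.
intros hs ht; unfold rel_density; apply Rdiv_lt_0_compat; [apply mix_pos; auto| apply gd_pos; lra].
Qed.

Lemma J2_cont a b s t : 0 < s -> 0 <= t <= 1 -> cont (J2 a b s t).
Proof.
intros hs ht. apply dif_cont. unfold J2. apply dif_mult; [|apply dif_mix; auto].
apply dif_ln; [| intros; apply rel_pos; auto].
apply (dif_ext (fun x => mixture_density a b s t x * / gd 0 1 x)); [intros; reflexivity|].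
apply dif_mult; [apply dif_mix; auto| apply dif_inv; [apply dif_gd; lra| intros; apply Rgt_not_eq, gd_pos; lra]].
Qed.

Theorem lemma2 (a b sigma t : R) (hs : 0 < sigma <= 1) (ht : 0 <= t <= 1) :
  exists (f' : R -> R) (I1 I2 : R),
    (forall x, derivable_pt_lim (rel_density a b sigma t) x (f' x)) /\
    improper_int (fun x => (f' x / rel_density a b sigma t x) ^ 2
                           * mixture_density a b sigma t x) I1 /\
    improper_int (fun x => ln (rel_density a b sigma t x)
                           * mixture_density a b sigma t x) I2 /\
    I1 / 2 - I2 <= / 4 * (/ sigma - 1) ^ 2 - xlnx (1 - t) - xlnx t.
Proof.
destruct hs as [hs hs1].
assert (D1 : forall x, Rabs (J1 a b sigma t x) <= U1 a b sigma t x).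
{ intros x; destruct (J1_bound a b sigma t x hs ht); rewrite Rabs_pos_eq; auto. }
destruct (iint_dom _ _ _ (J1_cont a b sigma t hs ht) (U1_cont a b sigma t hs) D1 (U1_iint a b sigma t hs)) as [I1 HI1].
destruct (H2_iint a b sigma hs) as [L2 HL2].
destruct (iint_dom _ _ _ (J2_cont a b sigma t hs ht) (H2_cont a b sigma hs) (fun x => J2_dom a b sigma t x hs ht) HL2) as [I2 HI2].
exists (fp a b sigma t), I1, I2.
split; [intros x; apply rel_deriv; auto|].
split; [apply (iint_improper (J1 a b sigma t)); [apply J1_cont; auto| exact HI1]|].
split; [apply (iint_improper (J2 a b sigma t)); [apply J2_cont; auto| exact HI2]|].
assert (Le1 : I1 <= V1 a b sigma t).
{ apply (iint_le (J1 a b sigma t) (U1 a b sigma t)); auto; [apply J1_cont| apply U1_cont| apply U1_iint| intros; apply J1_bound]; auto. }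
assert (Le2 : VW a b sigma t <= I2).
{ apply (iint_le (W2 a b sigma t) (J2 a b sigma t)); auto; [apply W2_cont| apply J2_cont| apply W2_iint| intros; apply J2_lower]; auto. }
assert (E : V1 a b sigma t / 2 - VW a b sigma t = / (2 * sigma) - / 2 + ln sigma / 2 - xlnx (1 - t) - xlnx t).
{ unfold V1, VW. field. lra. }
assert (K := key_ineq sigma (conj hs hs1)).
lra.
Qed.
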